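(* Let $d\geqslant 1$ be an integer and $x$ a real number with $d+1\leqslant x/2$. Then $$\sum_{K_{d+1}-d-1<k\leqslant K_{d+1}}\Big(d^2\lfloor x/k\rfloor+\frac{2dx}{\lfloor x/k\rfloor}-x^2F(x/k)\Big)=\frac{8d^2+4d-1}{3}\sqrt{(d+1)x}+O(d^{7/2}x^{-1/2})+O(d^2),$$ where $k$ runs over integers, with absolute implied constants.
   Context: $\lfloor\cdot\rfloor$ denotes the integer part. For an integer $d\geqslant 0$ and real $x>0$, $K_d=K_d(x)=\big\lfloor \big(d+\sqrt{d^2+4dx}\,\big)/2\big\rfloor$. For real $t$, $F(t)=\sum_{n>t-1}\frac{1}{n^2(n+1)^2}$, summed over positive integers $n>t-1$. *)

(* Defs.v *)
From Stdlib Require Import Reals Lra Lia ZArith.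
From Coquelicot Require Import Coquelicot.
Open Scope R_scope.

Definition floorR (r : R) : Z := Int_part r.

Definition Kd (d : nat) (x : R) : Z :=
  floorR ((INR d + sqrt (INR d ^ 2 + 4 * INR d * x)) / 2).

Definition F_term (t : R) (n : nat) : R :=
  match n with
  | O => 0
  | S _ => if Rlt_dec (t - 1) (INR n)
           then 1 / (INR n ^ 2 * (INR n + 1) ^ 2) else 0
  end.

Definition F (t : R) : R := Series (F_term t).

Definition summand (d : nat) (x : R) (k : Z) : R :=
  let q := IZR (floorR (x / IZR k)) in
  INR d ^ 2 * q + 2 * INR d * x / q - x ^ 2 * F (x / IZR k).

(* sum over integers k with K - d - 1 < k <= K, i.e. k = K - i, i = 0..d *)
Definition LHS (d : nat) (x : R) : R :=
  let K := Kd (S d) x in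
  sum_f_R0 (fun i => summand d x (K - Z.of_nat i)%Z) d.

(* Main.v *)
Require Import Defs.
From Stdlib Require Import Reals Lra Lia ZArith.
From Coquelicot Require Import Coquelicot.
Open Scope R_scope.

Definition fn (n : nat) : R := 1 / (INR n ^ 2 * (INR n + 1) ^ 2).
Definition ln3 (n : nat) : R := 1 / (3 * INR n ^ 3).
Definition un3 (n : nat) : R := 1 / (3 * INR n ^ 3) - 1 / (3 * INR n ^ 5).

Lemma Fterm_spec t n0 n : INR n0 <= t < INR n0 + 1 -> (1 <= n0)%nat ->
  F_term t n = if (n0 <=? n)%nat then fn n else 0.
Proof.
  intros [H1 H2] Hn0. destruct n as [|n].
  - simpl. destruct (Nat.leb_spec n0 0); [lia|reflexivity].
  - unfold F_term. destruct (Nat.leb_spec n0 (S n)) as [Hl|Hl].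
    + apply le_INR in Hl. destruct (Rlt_dec (t-1) (INR (S n))); [reflexivity|lra].
    + assert (HH: (S n + 1 <= n0)%nat) by lia. apply le_INR in HH. rewrite plus_INR in HH.
      change (INR 1) with 1 in HH.
      destruct (Rlt_dec (t-1) (INR (S n))) as [h|h]; [|reflexivity].
      exfalso. lra.
Qed.

Lemma tele_up (a : R) : 1 <= a -> 1 / (a^2 * (a+1)^2) + 1/(3*(a+1)^3) <= 1/(3*a^3).
Proof.
  intro Ha.
  assert (E: 1/(3*a^3) - (1 / (a^2 * (a+1)^2) + 1/(3*(a+1)^3)) = 1/(3*a^3*(a+1)^3)).
  { field. lra. }
  assert (0 < 1/(3*a^3*(a+1)^3)).
  { apply Rdiv_lt_0_compat; [lra|]. apply Rmult_lt_0_compat; [|apply pow_lt; lra].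
    apply Rmult_lt_0_compat; [lra|apply pow_lt; lra]. }
  lra.
Qed.

Lemma tele_lo (a : R) : 1 <= a ->
  1 / (3*a^3) - 1/(3*a^5) <= 1 / (a^2 * (a+1)^2) + (1/(3*(a+1)^3) - 1/(3*(a+1)^5)).
Proof.
  intro Ha.
  assert (E: 1 / (a^2 * (a+1)^2) + (1/(3*(a+1)^3) - 1/(3*(a+1)^5)) - (1 / (3*a^3) - 1/(3*a^5))
     = ((a+1)^5 - a^5 - a^2*(a+1)^2) / (3*a^5*(a+1)^5)).
  { field. lra. }
  assert (0 <= ((a+1)^5 - a^5 - a^2*(a+1)^2) / (3*a^5*(a+1)^5)).
  { apply Rdiv_le_0_compat.
    - assert (0 <= a^2) by nra. assert (0 <= a^3) by nra.
      nra.
    - apply Rmult_lt_0_compat; [|apply pow_lt; lra].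
      apply Rmult_lt_0_compat; [lra|apply pow_lt; lra]. }
  lra.
Qed.

Lemma psum_bounds t n0 : INR n0 <= t < INR n0 + 1 -> (1 <= n0)%nat -> forall N,
  0 <= sum_f_R0 (F_term t) N /\
  sum_f_R0 (F_term t) N <= ln3 n0 - ln3 (Nat.max (S N) n0) /\
  un3 n0 - un3 (Nat.max (S N) n0) <= sum_f_R0 (F_term t) N.
Proof.
  intros Ht Hn0. induction N as [|N IH].
  - simpl sum_f_R0.
    replace (Nat.max 1 n0) with n0 by lia. lra.
  - destruct IH as [I1 [I2 I3]]. change (sum_f_R0 (F_term t) (S N)) with (sum_f_R0 (F_term t) N + F_term t (S N)).
    rewrite (Fterm_spec t n0 (S N) Ht Hn0).
    destruct (Nat.leb_spec n0 (S N)) as [Hl|Hl].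
    + assert (Hf: 0 <= fn (S N)).
      { unfold fn. apply Rdiv_le_0_compat; [lra|]. apply Rmult_lt_0_compat; apply pow_lt;
        [apply lt_0_INR; lia| pose proof (pos_INR (S N)); lra]. }
      replace (Nat.max (S N) n0) with (S N) in * by lia.
      replace (Nat.max (S (S N)) n0) with (S (S N)) by lia.
      assert (HA: 1 <= INR (S N)) by (apply (le_INR 1); lia).
      pose proof (tele_up _ HA) as T1. pose proof (tele_lo _ HA) as T2.
      unfold fn, ln3, un3 in *. rewrite S_INR with (n := S N). split; [lra|split; lra].
    + replace (Nat.max (S (S N)) n0) with (Nat.max (S N) n0) by lia. lra.
Qed.

Lemma F_bounds t n0 : INR n0 <= t < INR n0 + 1 -> (1 <= n0)%nat ->
  un3 n0 <= F t <= ln3 n0.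
Proof.
  intros Ht Hn0. pose proof (psum_bounds t n0 Ht Hn0) as P.
  assert (Hs: forall N, sum_n (F_term t) N = sum_f_R0 (F_term t) N) by (intro; apply sum_n_Reals).
  assert (Hex: ex_finite_lim_seq (sum_n (F_term t))).
  { apply ex_finite_lim_seq_incr with (M := ln3 n0).
    - intro n. rewrite !Hs. change (sum_f_R0 (F_term t) (S n)) with (sum_f_R0 (F_term t) n + F_term t (S n)).
      rewrite (Fterm_spec t n0 (S n) Ht Hn0). destruct (n0 <=? S n)%nat; [|lra].
      assert (0 <= fn (S n)).
      { unfold fn. apply Rdiv_le_0_compat; [lra|]. apply Rmult_lt_0_compat; apply pow_lt;
        [apply lt_0_INR; lia| pose proof (pos_INR (S n)); lra]. }
      lra.
    - intro n. rewrite Hs. destruct (P n) as [_ [H _]].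
      assert (0 <= ln3 (Nat.max (S n) n0)).
      { unfold ln3. apply Rdiv_le_0_compat; [lra|]. apply Rmult_lt_0_compat; [lra|].
        apply pow_lt. apply lt_0_INR. lia. }
      lra. }
  pose proof (Lim_seq_correct' _ Hex) as HL.
  unfold F, Series. split.
  - assert (Hinv: is_lim_seq (fun N => / INR (S N)) 0).
    { pose proof is_lim_seq_INR as H. apply is_lim_seq_incr_1 in H.
      apply (is_lim_seq_inv _ _ H). discriminate. }
    assert (Hv: is_lim_seq (fun N => un3 n0 - / INR (S N)) (un3 n0 - 0)).
    { apply is_lim_seq_minus'; [apply is_lim_seq_const|exact Hinv]. }
    assert (Hpt: forall N, un3 n0 - / INR (S N) <= sum_n (F_term t) N).
    { intro N. rewrite Hs. destruct (P N) as [_ [_ H]].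
    set (m := Nat.max (S N) n0) in *.
    assert (Hm: INR (S N) <= INR m) by (apply le_INR; lia).
    assert (H1: 1 <= INR (S N)) by (apply (le_INR 1); lia).
    assert (un3 m <= / INR (S N)).
    { unfold un3. set (a := INR m) in *.
      assert (0 < 1/(3*a^5)). { apply Rdiv_lt_0_compat; [lra|]. apply Rmult_lt_0_compat; [lra|apply pow_lt; lra]. }
      assert (1/(3*a^3) <= / INR (S N)).
      { unfold Rdiv. rewrite Rmult_1_l. apply Rinv_le_contravar; [lra|].
        assert (a <= a^3) by nra. lra. }
      lra. }
    lra. }
    pose proof (is_lim_seq_le _ _ _ _ Hpt Hv HL) as R.
    simpl in R. rewrite Rminus_0_r in R. exact R.
  - assert (Hpt: forall N, sum_n (F_term t) N <= ln3 n0).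
    { intro N. rewrite Hs. destruct (P N) as [_ [H _]].
    assert (0 <= ln3 (Nat.max (S N) n0)).
    { unfold ln3. apply Rdiv_le_0_compat; [lra|]. apply Rmult_lt_0_compat; [lra|].
      apply pow_lt. apply lt_0_INR. lia. }
    lra. }
    pose proof (is_lim_seq_le _ _ _ _ Hpt HL (is_lim_seq_const (ln3 n0))) as R.
    simpl in R. exact R.
Qed.

Lemma PT_uv (dl x q t u v G : R) : 0 <= dl -> 0 < x -> 1 <= q -> q <= t < q + 1 ->
  q * u = 1 -> t * v = 1 ->
  u^3/3 - u^5/3 <= G <= u^3/3 ->
  Rabs (dl^2 * q + 2*dl*x*u - x^2 * G - (dl^2 * t + 2*dl*x*v - x^2 * v^3/3))
   <= 2 * (dl - x*v^2)^2 + 22 * x^2 * v^5.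
Proof.
  intros Hd Hx Hq Ht Hu Hv HG.
  assert (Hv0: 0 < v) by nra. assert (Hu0: 0 < u) by nra.
  assert (Hvu: v <= u) by nra. assert (Hu1: u <= 1) by nra.
  assert (Hu2: u <= 2*v) by nra.
  assert (Huv: u - v = (t - q) * u * v).
  { assert (u - v = (t*v)*u - (q*u)*v) by (rewrite Hu, Hv; ring). nra. }
  set (c := x*u*v).
  set (Bk := (dl - c)^2 + c * x * (u-v)^2/3).
  assert (E2: dl^2 * q + 2*dl*x*u - x^2*u^3/3 - (dl^2 * t + 2*dl*x*v - x^2 * v^3/3)
             = - (t - q) * Bk).
  { unfold Bk, c. clear Bk c.
    transitivity (dl^2*(q-t) + (u-v)*(2*dl*x - x^2*(u^2+u*v+v^2)/3)); [field|].
    rewrite Huv at 1. field. }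
  assert (HP1: 0 <= x^2*(u^3/3 - G) <= x^2*u^5/3).
  { assert (0 < x^2) by nra. split; nra. }
  assert (Hu5: u^5 <= 32 * v^5).
  { assert (u^5 <= (2*v)^5). { apply pow_incr. lra. } nra. }
  assert (Hw: 0 <= u - v <= u*v) by nra.
  assert (Hc0: 0 <= c) by (unfold c; repeat apply Rmult_le_pos; lra).
  assert (HB0: 0 <= Bk).
  { unfold Bk. assert (0 <= c*x*(u-v)^2) by (apply Rmult_le_pos; [apply Rmult_le_pos; lra| apply pow2_ge_0]). assert (0 <= (dl-c)^2) by apply pow2_ge_0. lra. }
  assert (Hv1: v <= 1) by lra.
  assert (Hv5: v^6 <= v^5) by (assert (0<= v^5) by (apply pow_le; lra); simpl; nra).
  assert (HB1: c*x*(u-v)^2 <= 8 * x^2 * v^5).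
  { assert ((u-v)^2 <= (u*v)^2) by nra.
    assert (c*x*(u-v)^2 <= c*x*(u*v)^2).
    { apply Rmult_le_compat_l; [|lra]. nra. }
    assert (c*x*(u*v)^2 = x^2*(u^3*v^3)) by (unfold c; ring).
    assert (u^3 <= (2*v)^3) by (apply pow_incr; lra).
    assert (u^3*v^3 <= 8*v^6).
    { assert (0 <= v^3) by (apply pow_le; lra). nra. }
    assert (0 < x^2) by nra. nra. }
  assert (HB2: (c - x*v^2)^2 <= 4 * x^2 * v^5).
  { assert (Hcv: c - x*v^2 = x*v*(u-v)) by (unfold c; ring).
    assert (0 <= x*v*(u-v) <= x*v*(u*v)) by (split; [apply Rmult_le_pos; nra| apply Rmult_le_compat_l; nra]).
    assert (x*v*(u*v) <= 2*x*v^3) by (simpl; nra).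
    assert ((c - x*v^2)^2 <= (2*x*v^3)^2) by (rewrite Hcv; apply pow_incr; lra).
    assert ((2*x*v^3)^2 = 4*x^2*v^6) by ring.
    assert (0 < x^2) by nra. nra. }
  assert (HB: Bk <= 2*(dl - x*v^2)^2 + 8*x^2*v^5 + 8/3*x^2*v^5).
  { unfold Bk. assert ((dl-c)^2 <= 2*(dl-x*v^2)^2 + 2*(c-x*v^2)^2) by (pose proof (pow2_ge_0 (dl - x*v^2 + (c - x*v^2))); nra). lra. }
  assert (Htq: 0 <= t - q < 1) by lra.
  assert (HP2: Rabs (-(t-q)*Bk) <= Bk).
  { rewrite Rabs_left1; nra. }
  replace (dl^2 * q + 2*dl*x*u - x^2 * G - (dl^2 * t + 2*dl*x*v - x^2 * v^3/3))
    with (-(t-q)*Bk + x^2*(u^3/3 - G)) by (rewrite <- E2; field).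
  eapply Rle_trans; [apply Rabs_triang|]. rewrite (Rabs_right (x^2*_)) by lra.
  assert (0 < x^2) by nra. nra.
Qed.

Lemma div_le a a' b b' : 0 <= a <= a' -> 0 < b' <= b -> a / b <= a' / b'.
Proof.
  intros Ha Hb. unfold Rdiv. apply Rmult_le_compat; try lra.
  - left; apply Rinv_0_lt_compat; lra.
  - apply Rinv_le_contravar; lra.
Qed.

Lemma Lk1 dl D x s k : D = dl + 1 -> 1 <= dl -> 0 < x -> 0 < s -> s^2 = D*x ->
  2*D^2 <= s^2 -> s - D <= k <= s + D ->
  2*(dl - k^2/x)^2 + 22*(k^5/x^3) <= 4 + 740*(D^3/s).
Proof.
  intros HD Hdl Hx Hs Hsx Hs2 Hk.
  assert (HD0: 0 < D) by lra.
  assert (HDs: D < s).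
  { destruct (Rlt_or_le D s) as [h|h]; [exact h|].
    assert (s*s <= D*D) by (apply Rmult_le_compat; lra). simpl in Hs2. nra. }
  assert (Hk0: 0 < k) by lra.
  assert (Hxe: x = s^2/D) by (rewrite Hsx; field; lra).
  assert (E1: k^2/x - D = D*(k^2 - s^2)/s^2) by (rewrite Hxe; field; lra).
  assert (Hks: -(3*D*s) <= k^2 - s^2 <= 3*D*s) by nra.
  assert (Hz: Rabs (k^2/x - D) <= 3*(D^2/s)).
  { rewrite E1. unfold Rdiv. rewrite Rabs_mult, Rabs_mult.
    rewrite (Rabs_right D) by lra. rewrite (Rabs_right (/ s^2)).
    2:{ left. apply Rinv_0_lt_compat. nra. }
    assert (Rabs (k^2 - s^2) <= 3*D*s) by (apply Rabs_le; lra).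
    assert (D * Rabs (k ^ 2 - s ^ 2) * / s ^ 2 <= D * (3*D*s) * / s^2).
    { apply Rmult_le_compat_r; [left; apply Rinv_0_lt_compat; nra|].
      apply Rmult_le_compat_l; lra. }
    assert (D * (3*D*s) * / s^2 = 3*(D^2 * /s)) by (field; lra). lra. }
  set (Y := D^2/s) in *.
  assert (HY2: Y^2 <= D^3/s).
  { unfold Y. assert (D^2/s*(D^2/s) = D^3/s * (D/s)) by (field; lra).
    assert (D/s <= 1).
    { replace 1 with (s/s) by (field; lra). apply div_le; lra. }
    assert (0 <= D^3/s) by (apply Rdiv_le_0_compat; [apply pow_le|]; lra).
    simpl pow. simpl pow in H. nra. }
  assert (Hz2: (k^2/x - D)^2 <= 9 * (D^3/s)).
  { assert ((k^2/x - D)^2 <= (3*Y)^2).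
    { rewrite <- pow2_abs. apply pow_incr. split; [apply Rabs_pos|exact Hz]. }
    nra. }
  assert (HA: 2*(dl - k^2/x)^2 <= 4 + 36*(D^3/s)).
  { replace (dl - k^2/x) with (-(1 + (k^2/x - D))) by lra.
    pose proof (pow2_ge_0 (1 - (k^2/x - D))). nra. }
  assert (HB: k^5/x^3 <= 32*(D^3/s)).
  { rewrite Hxe. assert (k^5 <= (2*s)^5) by (apply pow_incr; lra).
    assert (k^5/(s^2/D)^3 = k^5 * (D^3/s^6)) by (field; lra).
    assert (0 <= D^3/s^6) by (apply Rdiv_le_0_compat; [apply pow_le|apply pow_lt]; lra).
    assert (k ^ 5 * (D ^ 3 / s ^ 6) <= (2*s)^5 * (D^3/s^6)) by (apply Rmult_le_compat_r; lra).
    assert ((2*s)^5 * (D^3/s^6) = 32*(D^3/s)) by (field; lra).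
    lra. }
  lra.
Qed.



Lemma Lk2 dl D x s m j : D = dl + 1 -> 1 <= dl -> 0 < x -> 0 < s -> s^2 = D*x ->
  2*D^2 <= s^2 -> s/2 <= m <= 2*s -> Rabs j <= D/2 -> s/2 <= m + j ->
  Rabs (dl^2*x/(m+j) + 2*dl*(m+j) - (m+j)^3/(3*x)
        - ((dl^2*x/m + 2*dl*m - m^3/(3*x)) + j*(-(dl^2*x/m^2) + 2*dl - m^2/x)))
  <= 3*(D^3/s).
Proof.
  intros HD Hdl Hx Hs Hsx Hs2 Hm Hj Hmj.
  assert (HD0: 0 < D) by lra.
  assert (HDs: D < s).
  { destruct (Rlt_or_le D s) as [h|h]; [exact h|].
    assert (s*s <= D*D) by (apply Rmult_le_compat; lra). simpl in Hs2. nra. }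
  assert (Hxe: x = s^2/D) by (rewrite Hsx; field; lra).
  apply Rabs_le_between in Hj.
  assert (Hm0: 0 < m) by lra. assert (Hk0: 0 < m + j) by lra.
  assert (E: dl^2*x/(m+j) + 2*dl*(m+j) - (m+j)^3/(3*x)
        - ((dl^2*x/m + 2*dl*m - m^3/(3*x)) + j*(-(dl^2*x/m^2) + 2*dl - m^2/x))
        = dl^2*x*j^2/(m^2*(m+j)) - (3*m*j^2 + j^3)/(3*x)).
  { field. lra. }
  rewrite E.
  assert (HT1: 0 <= dl^2*x*j^2/(m^2*(m+j)) <= 2*(D^3/s)).
  { split.
    - apply Rdiv_le_0_compat; [|apply Rmult_lt_0_compat; [apply pow_lt|]; lra].
      apply Rmult_le_pos; [apply Rmult_le_pos; [apply pow_le|]|apply pow2_ge_0]; lra.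
    - replace (2*(D^3/s)) with ((D^3*s^2/4)/(s^3/8)) by (field; lra).
      apply div_le.
      + split.
        * apply Rmult_le_pos; [apply Rmult_le_pos; [apply pow_le|]|apply pow2_ge_0]; lra.
        * rewrite Hxe. replace (dl^2*(s^2/D)*j^2) with ((dl^2*j^2)*(s^2/D)) by ring.
          replace (D^3*s^2/4) with ((D^2*(D^2/4))*(s^2/D)) by (field; lra).
          apply Rmult_le_compat_r; [apply Rdiv_le_0_compat; [apply pow2_ge_0|lra]|].
          apply Rmult_le_compat; [apply pow2_ge_0|apply pow2_ge_0| |].
          { apply pow_incr; lra. }
          { assert (j^2 <= (D/2)^2) by (rewrite <- pow2_abs; apply pow_incr; split; [apply Rabs_pos|apply Rabs_le; lra]).
            lra. }
      + split; [apply Rdiv_lt_0_compat; [apply pow_lt|]; lra|].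
        replace (s^3/8) with ((s/2)^2*(s/2)) by field.
        apply Rmult_le_compat; [apply pow2_ge_0|lra| |lra].
        apply pow_incr; lra. }
  assert (HT2: Rabs ((3*m*j^2 + j^3)/(3*x)) <= (2/3)*(D^3/s)).
  { assert (Hn: Rabs (3*m*j^2 + j^3) <= 2*s*D^2).
    { assert (Hj2: j^2 <= (D/2)^2) by (rewrite <- pow2_abs; apply pow_incr; split; [apply Rabs_pos|apply Rabs_le; lra]).
      assert (Hj3: Rabs (j^3) <= (D/2)^3) by (rewrite <- RPow_abs; apply pow_incr; split; [apply Rabs_pos|apply Rabs_le; lra]).
      eapply Rle_trans; [apply Rabs_triang|].
      rewrite Rabs_right by (apply Rle_ge; apply Rmult_le_pos; [lra|apply pow2_ge_0]).
      assert (3*m*j^2 <= 3*(2*s)*(D/2)^2) by (apply Rmult_le_compat; try apply pow2_ge_0; lra).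
      assert ((D/2)^3 <= s * D^2/8).
      { replace ((D/2)^3) with (D*D^2/8) by field.
        apply Rmult_le_compat_r; [lra|]. apply Rmult_le_compat_r; [apply pow2_ge_0|lra]. }
      assert (0 <= s*D^2) by (apply Rmult_le_pos; [lra|apply pow2_ge_0]).
      lra. }
    unfold Rdiv. rewrite Rabs_mult. rewrite (Rabs_right (/ (3*x))) by (apply Rle_ge; left; apply Rinv_0_lt_compat; lra).
    assert (Rabs (3 * m * j ^ 2 + j ^ 3) * / (3 * x) <= 2*s*D^2 * / (3*x)).
    { apply Rmult_le_compat_r; [left; apply Rinv_0_lt_compat; lra|exact Hn]. }
    assert (2*s*D^2 * / (3*x) = 2/3*(D^3 * /s)) by (rewrite Hxe; field; lra).
    lra. }
  eapply Rle_trans; [apply Rabs_triang|]. rewrite Rabs_Ropp.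
  rewrite (Rabs_right (dl^2*x*j^2/(m^2*(m+j)))) by lra. lra.
Qed.



Lemma Lfin dl D x s e : D = dl + 1 -> 1 <= dl -> 0 < x -> 0 < s -> s^2 = D*x ->
  2*D^2 <= s^2 -> -(1/2) <= e <= 1/2 + D^2/(8*s) ->
  Rabs (D*(dl^2*x/(s+e) + 2*dl*(s+e) - (s+e)^3/(3*x)) - (8*dl^2+4*dl-1)/3*s)
  <= 5*(D^2 + D^4/s).
Proof.
  intros HD Hdl Hx Hs Hsx Hs2 He.
  assert (HD0: 2 <= D) by lra.
  assert (HDs: D < s).
  { destruct (Rlt_or_le D s) as [h|h]; [exact h|].
    assert (s*s <= D*D) by (apply Rmult_le_compat; lra). simpl in Hs2. nra. }
  assert (Hxe: x = s^2/D) by (rewrite Hsx; field; lra).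
  assert (Hs2': 2 <= s).
  { destruct (Rle_or_lt 2 s) as [h|h]; [exact h|]. assert (s*s < 2*2) by (apply Rmult_le_0_lt_compat; lra).
    simpl in Hs2. nra. }
  set (th := 1 + D^2/s).
  assert (HY: 0 <= D^2/s) by (apply Rdiv_le_0_compat; [apply pow2_ge_0|lra]).
  assert (HY2: D^2/s <= s/2).
  { replace (s/2) with ((s^2/2)/s) by (field; lra). apply div_le; [split; [apply pow2_ge_0|lra]|lra]. }
  assert (Hth: 1 <= th <= s) by (unfold th; lra).
  assert (He': Rabs e <= th).
  { apply Rabs_le. unfold th. assert (D^2/(8*s) = (D^2/s)/8) by (field; lra). lra. }
  set (rho := th/s).
  assert (Hrho: 0 < rho <= 1).
  { unfold rho. split; [apply Rdiv_lt_0_compat; lra|].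
    replace 1 with (s/s) by (field; lra). apply div_le; lra. }
  assert (Hthr: th = rho * s) by (unfold rho; field; lra).
  assert (Hm: s/2 <= s + e) by (apply Rabs_le_between in He'; lra).
  assert (E: D*(dl^2*x/(s+e) + 2*dl*(s+e) - (s+e)^3/(3*x)) - (8*dl^2+4*dl-1)/3*s
     = -e + dl^2*e^2/(s+e) - (D^2*e^2/s + D^2*e^3/(3*s^2))).
  { rewrite Hxe, HD. field. split; lra. }
  rewrite E.
  assert (He2: e^2 <= th^2) by (rewrite <- pow2_abs; apply pow_incr; split; [apply Rabs_pos|lra]).
  assert (He3: Rabs (e^3) <= th^3) by (rewrite <- RPow_abs; apply pow_incr; split; [apply Rabs_pos|lra]).
  assert (HD2: 0 < D^2) by (apply pow_lt; lra).
  assert (A1: 0 <= dl^2*e^2/(s+e) <= 2*(D^2*th)).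
  { split. { apply Rdiv_le_0_compat; [apply Rmult_le_pos; apply pow2_ge_0|lra]. }
    replace (2*(D^2*th)) with ((D^2*th^2)/(s/2) * (1/rho)) by (rewrite Hthr; field; lra).
    assert (dl^2*e^2/(s+e) <= (D^2*th^2)/(s/2)).
    { apply div_le; [|lra]. split; [apply Rmult_le_pos; apply pow2_ge_0|].
      apply Rmult_le_compat; try apply pow2_ge_0; [apply pow_incr; lra|lra]. }
    assert (1 <= 1/rho). { replace 1 with (rho/rho) at 1 by (field; lra). apply div_le; lra. }
    assert (0 <= (D^2*th^2)/(s/2)) by (apply Rdiv_le_0_compat; [apply Rmult_le_pos; [lra|apply pow2_ge_0]|lra]).
    nra. }
  assert (A2: 0 <= D^2*e^2/s <= D^2*th).
  { split. { apply Rdiv_le_0_compat; [apply Rmult_le_pos; [lra|apply pow2_ge_0]|lra]. }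
    assert (D^2*e^2/s <= D^2*th^2/s) by (apply div_le; [split; [apply Rmult_le_pos; [lra|apply pow2_ge_0]|apply Rmult_le_compat_l; lra]|lra]).
    assert (D^2*th^2/s = (D^2*th)*rho) by (rewrite Hthr; field; lra).
    assert (0 <= D^2*th) by nra. nra. }
  assert (A3: Rabs (D^2*e^3/(3*s^2)) <= D^2*th/3).
  { unfold Rdiv. rewrite !Rabs_mult. rewrite (Rabs_right (D^2)) by lra.
    rewrite (Rabs_right (/ (3*s^2))) by (apply Rle_ge; left; apply Rinv_0_lt_compat; nra).
    assert (D^2*Rabs(e^3)*/(3*s^2) <= D^2*th^3*/(3*s^2)).
    { apply Rmult_le_compat_r; [left; apply Rinv_0_lt_compat; nra|]. apply Rmult_le_compat_l; lra. }
    assert (D^2*th^3*/(3*s^2) = (D^2*th/3)*(rho^2)) by (rewrite Hthr; field; lra).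
    assert (rho^2 <= 1) by (simpl; nra).
    assert (0 <= D^2*th/3) by nra. nra. }
  assert (Hfin: th + 2*(D^2*th) + D^2*th + D^2*th/3 <= 5*(D^2 + D^4/s)).
  { assert (D^2*th = D^2 + D^4/s) by (unfold th; field; lra).
    assert (th <= D^2*th) by nra. lra. }
  eapply Rle_trans; [apply Rabs_triang|].
  rewrite Rabs_Ropp. 
  eapply Rle_trans; [apply Rplus_le_compat_r; apply Rabs_triang|].
  rewrite Rabs_Ropp, (Rabs_right (dl^2*e^2/(s+e))) by lra.
  assert (Rabs (D ^ 2 * e ^ 2 / s + D ^ 2 * e ^ 3 / (3 * s ^ 2)) <= D^2*th + D^2*th/3).
  { eapply Rle_trans; [apply Rabs_triang|]. rewrite (Rabs_right (D^2*e^2/s)) by lra. lra. }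
  lra.
Qed.

Lemma sum_lin n (a : nat -> R) P L B :
  (forall i, (i <= n)%nat -> Rabs (a i - (P + (INR n/2 - INR i)*L)) <= B) ->
  Rabs (sum_f_R0 a n - (INR n + 1)*P) <= (INR n + 1)*B.
Proof.
  intros H.
  assert (S1: forall c N, sum_f_R0 (fun i => P + (c - INR i)*L) N
     = (INR N + 1)*(P + c*L) - L*(INR N*(INR N+1)/2)).
  { intros c N. induction N as [|N IH].
    - simpl. field.
    - rewrite tech5, IH, S_INR. field. }
  assert (E: sum_f_R0 a n - (INR n + 1)*P
     = sum_f_R0 (fun i => a i - (P + (INR n/2 - INR i)*L)) n).
  { rewrite minus_sum, S1. field. }
  rewrite E. eapply Rle_trans; [apply sum_f_R0_triangle|].
  eapply Rle_trans; [apply sum_Rle with (Bn := fun _ => B); exact H|].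
  rewrite sum_cte, S_INR. lra.
Qed.

Lemma floor_facts r : IZR (floorR r) <= r < IZR (floorR r) + 1.
Proof. unfold floorR. destruct (base_Int_part r). lra. Qed.

Definition P0f (dl x m : R) := dl^2*x/m + 2*dl*m - m^3/(3*x).
Definition Lf (dl x m : R) := -(dl^2*x/m^2) + 2*dl - m^2/x.

Lemma pterm d x s Kz i : (1 <= d)%nat -> 0 < x -> 0 < s -> s^2 = (INR d + 1)*x ->
  2*(INR d + 1)^2 <= s^2 -> (i <= d)%nat ->
  -(1/2) <= IZR Kz - INR d/2 - s <= 1/2 + (INR d+1)^2/(8*s) -> IZR Kz <= x ->
  Rabs (summand d x (Kz - Z.of_nat i)
        - (P0f (INR d) x (IZR Kz - INR d/2) + (INR d/2 - INR i)*Lf (INR d) x (IZR Kz - INR d/2)))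
  <= 4 + 743*((INR d+1)^3/s).
Proof.
  intros Hd Hx Hs Hsx Hs2 Hi HK HKx.
  set (dl := INR d) in *. set (D := dl + 1) in *.
  assert (Hdl: 1 <= dl) by (unfold dl; apply (le_INR 1); lia).
  assert (Hi0: 0 <= INR i <= dl) by (split; [apply pos_INR|unfold dl; apply le_INR; lia]).
  assert (HD0: 2 <= D) by (unfold D; lra).
  assert (HDs: D < s).
  { destruct (Rlt_or_le D s) as [h|h]; [exact h|].
    assert (s*s <= D*D) by (apply Rmult_le_compat; lra). simpl in Hs2. nra. }
  assert (Hs2': 2 <= s).
  { destruct (Rle_or_lt 2 s) as [h|h]; [exact h|]. assert (s*s < 2*2) by (apply Rmult_le_0_lt_compat; lra).
    simpl in Hs2. nra. }
  assert (HY: 0 <= D^2/s) by (apply Rdiv_le_0_compat; [apply pow2_ge_0|lra]).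
  assert (HY2: D^2/s <= s/2).
  { replace (s/2) with ((s^2/2)/s) by (field; lra). apply div_le; [split; [apply pow2_ge_0|lra]|lra]. }
  assert (HY3: D^2/s <= D).
  { replace D with ((D*s)/s) at 2 by (field; lra). apply div_le; [split; [apply pow2_ge_0|simpl; nra]|lra]. }
  assert (HY8: D^2/(8*s) = (D^2/s)/8) by (field; lra).
  set (K := IZR Kz) in *.
  set (k := K - INR i).
  assert (Hkz: IZR (Kz - Z.of_nat i) = k) by (rewrite minus_IZR, <- INR_IZR_INZ; reflexivity).
  assert (Hk1: s - D <= k <= s + D) by (unfold k, D in *; lra).
  assert (Hk2: s/2 <= k) by (unfold k, D in *; lra).
  assert (Hkx: k <= x) by (unfold k; lra).
  assert (Hk0: 0 < k) by lra.
  set (m := K - dl/2).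
  assert (Hm: s/2 <= m <= 2*s) by (unfold m; lra).
  pose proof (Lk2 dl D x s m (dl/2 - INR i) eq_refl Hdl Hx Hs Hsx Hs2 Hm) as L2.
  replace (m + (dl/2 - INR i)) with k in L2 by (unfold m, k; ring).
  assert (Hj: Rabs (dl/2 - INR i) <= D/2) by (apply Rabs_le; unfold D; lra).
  specialize (L2 Hj Hk2).
  pose proof (Lk1 dl D x s k eq_refl Hdl Hx Hs Hsx Hs2 Hk1) as L1.
  set (t := x / k).
  assert (Ht1: 1 <= t) by (unfold t; replace 1 with (k/k) by (field; lra); apply div_le; lra).
  destruct (floor_facts t) as [Hq1 Hq2].
  set (q := IZR (floorR t)) in *.
  assert (Hq0: 1 <= q).
  { assert (0 < q) by lra. unfold q in *. apply lt_IZR in H. apply IZR_le. lia. }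
  set (n0 := Z.to_nat (floorR t)).
  assert (Hn0: INR n0 = q).
  { assert (Hz: (0 <= floorR t)%Z) by (apply le_IZR; change (IZR (floorR t)) with q; lra).
    unfold n0, q. rewrite INR_IZR_INZ, Z2Nat.id; [reflexivity|exact Hz]. }
  assert (Hn01: (1 <= n0)%nat) by (apply INR_le; rewrite Hn0; change (INR 1) with 1; lra).
  destruct (F_bounds t n0 ltac:(rewrite Hn0; lra) Hn01) as [G1 G2].
  unfold un3, ln3 in G1, G2. rewrite Hn0 in G1, G2.
  assert (HG: (/q)^3/3 - (/q)^5/3 <= F t <= (/q)^3/3).
  { replace ((/q)^3/3) with (1/(3*q^3)) by (field; lra).
    replace ((/q)^5/3) with (1/(3*q^5)) by (field; lra). lra. }
  pose proof (PT_uv dl x q t (/q) (/t) (F t) ltac:(lra) Hx Hq0 ltac:(lra)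
     ltac:(field; lra) ltac:(field; lra) HG) as L0.
  assert (Hvt: /t = k/x) by (unfold t; field; lra).
  rewrite Hvt in L0.
  replace (2 * (dl - x * (k / x) ^ 2) ^ 2 + 22 * x ^ 2 * (k / x) ^ 5)
    with (2*(dl - k^2/x)^2 + 22*(k^5/x^3)) in L0 by (field; lra).
  replace (dl ^ 2 * t + 2 * dl * x * (k / x) - x ^ 2 * (k / x) ^ 3 / 3)
    with (dl^2*x/k + 2*dl*k - k^3/(3*x)) in L0 by (unfold t; field; lra).
  unfold summand. rewrite Hkz. fold dl. fold t. fold q.
  replace (dl ^ 2 * q + 2 * dl * x / q - x ^ 2 * F t) with (dl ^ 2 * q + 2 * dl * x * / q - x ^ 2 * F t) by (field; lra).
  unfold P0f, Lf. fold m.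
  set (A := dl ^ 2 * q + 2 * dl * x * / q - x ^ 2 * F t) in *.
  set (Hk := dl ^ 2 * x / k + 2 * dl * k - k ^ 3 / (3 * x)) in *.
  set (PJ := dl ^ 2 * x / m + 2 * dl * m - m ^ 3 / (3 * x) +
     (dl / 2 - INR i) * (- (dl ^ 2 * x / m ^ 2) + 2 * dl - m ^ 2 / x)) in *.
  replace (A - PJ) with ((A - Hk) + (Hk - PJ)) by ring.
  eapply Rle_trans; [apply Rabs_triang|]. lra.
Qed.

Lemma core d x : (1 <= d)%nat -> INR d + 1 <= x/2 ->
  Rabs (LHS d x - (8*INR d^2+4*INR d-1)/3*sqrt((INR d+1)*x))
  <= 750*((INR d+1)^2 + (INR d+1)^4/sqrt((INR d+1)*x)).
Proof.
  intros Hd Hx2.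
  set (dl := INR d) in *. set (D := dl + 1) in *.
  assert (Hdl: 1 <= dl) by (unfold dl; apply (le_INR 1); lia).
  assert (HD0: 2 <= D) by (unfold D; lra).
  assert (Hx: 0 < x) by lra.
  set (s := sqrt (D*x)).
  assert (Hs: 0 < s) by (apply sqrt_lt_R0; nra).
  assert (Hsx: s^2 = D*x) by (unfold s; simpl; rewrite Rmult_1_r; apply sqrt_sqrt; nra).
  assert (Hs2: 2*D^2 <= s^2) by (rewrite Hsx; simpl; nra).
  assert (HDs: D < s).
  { destruct (Rlt_or_le D s) as [h|h]; [exact h|].
    assert (s*s <= D*D) by (apply Rmult_le_compat; lra). simpl in Hs2. nra. }
  set (w := sqrt (D^2 + 4*D*x)).
  assert (Hw0: 0 <= w) by apply sqrt_pos.
  assert (Hww: w*w = D^2 + 4*D*x) by (apply sqrt_sqrt; nra).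
  assert (Hw1: 2*s <= w) by (simpl in Hsx; nra).
  assert (Hw2: w <= 2*s + D^2/(4*s)).
  { set (a := 2*s + D^2/(4*s)).
    assert (0 <= D^2/(4*s)) by (apply Rdiv_le_0_compat; [apply pow2_ge_0|lra]).
    assert (a*a = 4*s^2 + D^2 + (D^2/(4*s))^2) by (unfold a; field; lra).
    assert (0 <= (D^2/(4*s))^2) by apply pow2_ge_0.
    assert (w*w <= a*a) by lra.
    destruct (Rle_or_lt w a) as [h|h]; [exact h|].
    assert (a*a < w*w) by (apply Rmult_le_0_lt_compat; unfold a in *; lra). lra. }
  assert (Hw3: w <= 2*x - D).
  { destruct (Rle_or_lt w (2*x - D)) as [h|h]; [exact h|].
    assert ((2*x-D)*(2*x-D) < w*w) by (apply Rmult_le_0_lt_compat; lra). nra. }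
  set (Kz := Kd (S d) x).
  assert (HKr: IZR Kz <= (D + w)/2 < IZR Kz + 1).
  { unfold Kz, Kd. rewrite S_INR. fold dl D w. apply floor_facts. }
  assert (HY8: D^2/(8*s) = (D^2/(4*s))/2) by (field; lra).
  assert (HK: -(1/2) <= IZR Kz - dl/2 - s <= 1/2 + D^2/(8*s)) by (unfold D in *; lra).
  assert (HKx: IZR Kz <= x) by lra.
  unfold LHS. cbv zeta. fold Kz.
  set (m := IZR Kz - dl/2).
  pose proof (sum_lin d (fun i => summand d x (Kz - Z.of_nat i)) (P0f dl x m) (Lf dl x m)
     (4 + 743*(D^3/s))) as SL.
  specialize (SL (fun i Hi => pterm d x s Kz i Hd Hx Hs Hsx Hs2 Hi HK HKx)).
  fold dl D in SL.
  pose proof (Lfin dl D x s (IZR Kz - dl/2 - s) eq_refl Hdl Hx Hs Hsx Hs2 HK) as LF.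
  replace (s + (IZR Kz - dl/2 - s)) with m in LF by (unfold m; ring).
  unfold P0f in SL. fold s.
  assert (E: D*(4 + 743*(D^3/s)) = 4*D + 743*(D^4/s)) by (field; lra).
  rewrite E in SL.
  set (P := dl^2*x/m + 2*dl*m - m^3/(3*x)) in *.
  set (Sm := sum_f_R0 (fun i => summand d x (Kz - Z.of_nat i)) d) in *.
  set (M := (8*dl^2+4*dl-1)/3*s) in *.
  replace (Sm - M) with ((Sm - D*P) + (D*P - M)) by ring.
  eapply Rle_trans; [apply Rabs_triang|].
  assert (0 <= D^4/s) by (apply Rdiv_le_0_compat; [apply pow_le|]; lra).
  assert (4*D <= 2*D^2) by (simpl; nra). lra.
Qed.

Theorem proposition8 :
  exists C : R, forall (d : nat) (x : R),
    (1 <= d)%nat -> INR d + 1 <= x / 2 ->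
    Rabs (LHS d x - (8 * INR d ^ 2 + 4 * INR d - 1) / 3 * sqrt ((INR d + 1) * x))
      <= C * (INR d ^ 3 * sqrt (INR d) / sqrt x + INR d ^ 2).
Proof.
  exists 96000. intros d x Hd Hx2.
  eapply Rle_trans; [apply core; assumption|].
  set (dl := INR d) in *.
  assert (Hdl: 1 <= dl) by (unfold dl; apply (le_INR 1); lia).
  assert (Hx: 0 < x) by lra.
  set (D := dl + 1).
  set (tau := sqrt D). set (sg := sqrt dl). set (y := sqrt x).
  assert (Ht: 0 < tau) by (apply sqrt_lt_R0; unfold D; lra).
  assert (Hsg: 0 < sg) by (apply sqrt_lt_R0; lra).
  assert (Hy: 0 < y) by (apply sqrt_lt_R0; lra).
  assert (Ht2: tau*tau = D) by (apply sqrt_sqrt; unfold D; lra).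
  assert (Hsg2: sg*sg = dl) by (apply sqrt_sqrt; lra).
  assert (Hs: sqrt (D*x) = tau*y) by (apply sqrt_mult; unfold D; lra).
  rewrite Hs.
  assert (Hts: tau <= 2*sg).
  { destruct (Rle_or_lt tau (2*sg)) as [h|h]; [exact h|].
    assert ((2*sg)*(2*sg) < tau*tau) by (apply Rmult_le_0_lt_compat; lra). unfold D in *. nra. }
  assert (H7: tau^7 <= (2*sg)^7) by (apply pow_incr; lra).
  assert (E1: D^4/(tau*y) = tau^7/y) by (rewrite <- Ht2; field; lra).
  assert (E2: dl^3*sg/y = sg^7/y) by (rewrite <- Hsg2; field; lra).
  rewrite E1, E2.
  assert (tau^7/y <= 128*(sg^7/y)).
  { replace (128*(sg^7/y)) with ((2*sg)^7/y) by (field; lra).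
    apply div_le; [split; [apply pow_le; lra|exact H7]|lra]. }
  assert (D^2 <= 4*dl^2) by (unfold D; simpl; nra).
  assert (0 <= dl^2) by apply pow2_ge_0. lra.
Qed.
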